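(* Under the hypotheses of Theorem 9 (connected $G$, non-cut edge $e=(i,j)$, $i\ne j$, $a_{ij}>0$, $v=e_i-e_j$, $\widehat A=A+a_{ij}vv^T$, $c(e)=K(D^{-1}\widehat A)-K(D^{-1}A)$), the matrix \[ S=D-A+\frac{1}{\|d\|_1}dd^T \] is symmetric positive definite, and with $x=S^{-1}v$, $\alpha=a_{ij}(x_i-x_j)$, $\beta=a_{ij}x^TDx$, one has $\alpha\neq 1$ and \[ c(e)=\frac{\beta}{1-\alpha}. \]
   Context: Graphs are undirected and possibly weighted on vertex set $\{1,\dots,n\}$, with symmetric nonnegative adjacency matrix $A=(a_{k\ell})$; $d=A\mathbf 1$ (all entries assumed positive), $D=\mathrm{diag}(d)$, $\|d\|_1=\sum_kd_k$; $e_k$ is the $k$-th column of the identity and $\mathbf 1$ the all-ones vector. For an irreducible row-stochastic matrix $Q$ with stationary vector $\pi$, the Kemeny constant is $K(Q)=\sum_j\pi_j m_{kj}$, where $m_{kj}$ is the expected first passage time from $k$ to $j$ ($m_{kk}=0$), independent of $k$; equivalently $K(Q)=\sum_{\ell=2}^n 1/(1-\lambda_\ell)$, where $1=\lambda_1,\lambda_2,\dots,\lambda_n$ are the eigenvalues of $Q$. The edge $e$ is a cut-edge if the graph obtained by deleting $e$ is disconnected. *)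

(* Defs.v *)
From HB Require Import structures.
From mathcomp Require Import all_boot all_order all_algebra.
From mathcomp Require Import complex.
Set Implicit Arguments. Unset Strict Implicit. Unset Printing Implicit Defensive.
Import Order.TTheory GRing.Theory Num.Theory.
Local Open Scope ring_scope.

Section Defs.
Variable R : rcfType.

Definition degv n (A : 'M[R]_n) : 'cV[R]_n := A *m const_mx 1.
Definition degmx n (A : 'M[R]_n) : 'M[R]_n := diag_mx (degv A)^T.
Definition vol n (A : 'M[R]_n) : R := \sum_k degv A k 0.

Definition adjrel n (A : 'M[R]_n) : rel 'I_n := fun k l => 0 < A k l.
Definition connected n (A : 'M[R]_n) : Prop :=
  forall k l : 'I_n, connect (adjrel A) k l.

Definition del_edge n (A : 'M[R]_n) (i j : 'I_n) : 'M[R]_n :=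
  \matrix_(k, l) (if ((k == i) && (l == j)) || ((k == j) && (l == i))
                  then 0 else A k l).
Definition cut_edge n (A : 'M[R]_n) (i j : 'I_n) : Prop :=
  ~ connected (del_edge A i j).

Definition evec n (k : 'I_n) : 'cV[R]_n := delta_mx k 0.

(* eigenvalues of Q (with multiplicity), computed in R[i] as the roots of
   the characteristic polynomial *)
Definition spectrum n (Q : 'M[R]_n) : seq R[i] :=
  sval (closed_field_poly_normal (char_poly (map_mx (real_complex R) Q))).

(* Kemeny constant K(Q) = sum_{l >= 2} 1/(1 - lambda_l), where lambda_1 = 1 *)
Definition kemeny n (Q : 'M[R]_n) : R[i] :=
  \sum_(lam <- rem 1 (spectrum Q)) (1 - lam)^-1.

Definition posdef n (S : 'M[R]_n) : Prop :=
  forall x : 'cV[R]_n, x != 0 -> 0 < (x^T *m S *m x) 0 0.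

End Defs.

(* Main.v *)
Require Import Defs.
From HB Require Import structures.
From mathcomp Require Import all_boot all_order all_algebra.
From mathcomp Require Import complex ring.
Import Order.TTheory GRing.Theory Num.Theory.
Local Open Scope ring_scope.

Section PolyGen.
Variable F : fieldType.

Lemma prodXsubC_coef_top (L : seq F) :
  (\prod_(z <- L) ('X - z%:P))`_(size L) = 1.
Proof.
have /monicP : \prod_(z <- L) ('X - z%:P) \is monic by apply: monic_prod_XsubC.
by rewrite lead_coefE size_prod_XsubC.
Qed.

Lemma prodXsubC_coef_last (L : seq F) : L != [::] ->
  (\prod_(z <- L) ('X - z%:P))`_(size L).-1 = - \sum_(z <- L) z.
Proof.
elim: L => [//|a L IH] _.
rewrite big_cons mulrBl coefB coefXM coefCM big_cons /=.
case: L IH => [|b L] IH.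
  by rewrite !big_nil /= coef1 mulr1 sub0r addr0.
rewrite IH // prodXsubC_coef_top.
by rewrite mulr1 opprD addrC.
Qed.

Lemma prod_scale_seq (I : Type) (L : seq I) (c : F) (f : I -> F) :
  c ^+ size L * \prod_(z <- L) f z = \prod_(z <- L) (c * f z).
Proof.
elim: L => [|a L IH]; first by rewrite !big_nil expr0 mulr1.
by rewrite !big_cons /= exprS -IH; ring.
Qed.

End PolyGen.

Lemma poly_eq_eval (F : numFieldType) (p q : {poly F}) :
  (forall x, x != 0 -> p.[x] = q.[x]) -> p = q.
Proof.
move=> H; apply/eqP; rewrite -subr_eq0; apply/eqP.
pose rs := [seq (i.+1)%:R : F | i <- iota 0 (size (p - q))].
apply: (@roots_geq_poly_eq0 _ _ rs).
- apply/allP => x /mapP [i _ ->]; rewrite rootE hornerD hornerN H ?subrr //.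
  by rewrite pnatr_eq0.
- rewrite map_inj_uniq ?iota_uniq // => a b /eqP; rewrite eqr_nat eqSS.
  by move/eqP.
- by rewrite size_map size_iota.
Qed.

Lemma horner_char_poly (F : comNzRingType) n (A : 'M[F]_n) x :
  (char_poly A).[x] = \det (x%:M - A).
Proof.
rewrite /char_poly -[_.[x]]/(horner_eval x _) -det_map_mx; congr (\det _).
apply/matrixP => i j; rewrite !mxE /horner_eval.
by rewrite rmorphB rmorphMn /= /horner_eval hornerX hornerC.
Qed.
Arguments horner_char_poly {F n} A x.

Lemma trace_inv (F : numFieldType) n (B : 'M[F]_n) (L : seq F) :
  (0 < n)%N -> B \in unitmx -> char_poly B = \prod_(z <- L) ('X - z%:P) ->
  \tr (invmx B) = \sum_(z <- L) z^-1.
Proof.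
move=> n0 uB hB.
have szL : size L = n.
  by have := size_char_poly B; rewrite hB size_prod_XsubC => -[].
have hdet : \prod_(z <- L) z = \det B.
  have := horner_char_poly B 0; rewrite hB horner_prod.
  have -> : (0%:M : 'M[F]_n) = 0 by apply/matrixP => i j; rewrite !mxE mul0rn.
  rewrite sub0r -scaleN1r detZ.
  under eq_bigr do rewrite hornerXsubC sub0r -mulN1r.
  rewrite -prod_scale_seq szL => /mulrI; apply.
  by rewrite unitfE signr_eq0.
have nz : forall z, z \in L -> z != 0.
  move=> z zL; apply: contraTneq uB => z0.
  rewrite unitmxE unitfE -hdet negbK prodf_seq_eq0; apply/hasP; exists z => //.
  by rewrite z0 eqxx.
have detnz : \det B != 0 by rewrite -unitfE -unitmxE.
set M := invmx B.
have cM : char_poly M = \prod_(z <- map GRing.inv L) ('X - z%:P).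
  apply: poly_eq_eval => x x0.
  rewrite horner_char_poly horner_prod big_map.
  have -> : x%:M - M = M *m ((- x) *: (x^-1%:M - B)).
    rewrite -scalemxAr mulmxBr mul_mx_scalar mulVmx // scalerBr scalerA.
    rewrite mulNr divff // scaleN1r.
    by rewrite scaleNr opprK scalemx1 addrC.
  rewrite det_mulmx detZ -horner_char_poly hB horner_prod /M det_inv -hdet.
  rewrite -prodfV -szL prod_scale_seq -big_split /=.
  apply: eq_big_seq => z zL; rewrite !hornerXsubC.
  have := nz z zL => zn0; field.
  by apply/andP; split.
have := char_poly_trace M n0; rewrite cM.
have -> : n.-1 = (size (map GRing.inv L)).-1 by rewrite size_map szL.
rewrite prodXsubC_coef_last; last by rewrite -size_eq0 size_map szL -lt0n.
by move/eqP; rewrite eqr_opp big_map => /eqP <-.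
Qed.

Lemma char_poly_rank1 (F : fieldType) n (C : 'M[F]_n) (u : 'cV_n) (w : 'rV_n) :
  C *m u = 0 -> w *m u = 1%:M ->
  char_poly (C + u *m w) * 'X = char_poly C * ('X - 1).
Proof.
move=> Cu wu.
set up := map_mx polyC u; set wp := map_mx polyC w.
set Q := block_mx (char_poly_mx C) up wp (1%:M : 'M_1).
have h1 : block_mx 1%:M up 0 (1%:M : 'M_1) *m
          block_mx (char_poly_mx (C + u *m w)) 0 wp (1%:M : 'M_1) = Q.
  rewrite mulmx_block !mul1mx !mulmx0 !mul0mx ?addr0 ?add0r ?mulmx1.
  rewrite /Q; congr block_mx; rewrite /char_poly_mx map_mxD map_mxM -/up -/wp.
  by rewrite opprD addrA subrK.
have h2 : Q *m block_mx ('X%:M) (- up) 0 ('X%:M : 'M_1) =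
          block_mx ('X *: char_poly_mx C) 0 ('X *: wp) (('X - 1)%:M : 'M_1).
  rewrite mulmx_block ?mulmx0 ?addr0 ?mul_mx_scalar ?mul1mx.
  congr block_mx.
  - rewrite mulmxN /char_poly_mx mulmxBl mul_scalar_mx -map_mxM Cu map_mx0.
    by rewrite subr0 addNr.
  - rewrite mulmxN -map_mxM wu map_scalar_mx /= polyC1 scalemx1 addrC.
    by rewrite (raddfB (@scalar_mx _ 1)).
have := congr1 determinant h2; rewrite -h1 !det_mulmx !det_ublock !det_lblock.
rewrite !det_scalar !detZ !expr1n !expr1 !mul1r !mulr1 -/(char_poly _) -/(char_poly C).
have Xn0 : ('X^n : {poly F}) != 0 by rewrite expf_neq0 // polyX_eq0.
rewrite mulrC -!mulrA => /(mulfI Xn0).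
by rewrite mulrC.
Qed.


Lemma kemeny_trace (R : rcfType) n (A : 'M[R]_n) :
  (0 < n)%N -> (forall k, 0 < degv A k 0) ->
  (degmx A - A + (vol A)^-1 *: (degv A *m (degv A)^T)) \in unitmx ->
  kemeny (invmx (degmx A) *m A) =
  real_complex R (\tr (invmx (degmx A - A + (vol A)^-1 *: (degv A *m (degv A)^T)) *m degmx A)) - 1.
Proof.
move=> n0 dpos.
set d := degv A; set D := degmx A; set S := D - A + _ => uS.
set P := invmx D *m A.
pose one : 'cV[R]_n := const_mx 1.
have hD : D \in unitmx.
  rewrite unitmxE unitfE /D /degmx det_diag; apply/prodf_neq0 => k _.
  by rewrite mxE gt_eqF.
have hDone : D *m one = d.
  apply/matrixP => k l; rewrite /D /degmx mul_diag_mx !mxE ord1 mulr1.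
  by [].
have hvol : vol A != 0.
  rewrite gt_eqF // /vol (bigD1 (Ordinal n0)) //=.
  by rewrite ltr_pwDl ?dpos // sumr_ge0 // => k _; rewrite ltW.
have hd : d = A *m one by [].
pose pi := (vol A)^-1 *: d.
pose C := 1%:M - P.
have hPone : P *m one = one by rewrite /P -mulmxA -hd -hDone mulKmx.
have hCone : C *m one = 0 by rewrite /C mulmxBl mul1mx hPone subrr.
have hpione : pi^T *m one = 1%:M.
  apply/matrixP => a b; rewrite !ord1 [LHS]mxE [RHS]mxE /= mulr1n.
  under eq_bigr do rewrite [const_mx _ _ _]mxE mulr1 [_^T _ _]mxE [pi _ _]mxE.
  by rewrite -mulr_sumr mulVf.
have hB : C + one *m pi^T = invmx D *m S.
  rewrite /S /C /P !mulmxDr mulmxN mulVmx // -scalemxAr mulmxA.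
  have -> : invmx D *m d = one by rewrite -hDone mulKmx.
  by rewrite linearZ /= scalemxAr.
have uB : (C + one *m pi^T) \in unitmx by rewrite hB unitmx_mul unitmx_inv hD.
have hBinv : invmx (C + one *m pi^T) = invmx S *m D.
  rewrite -[RHS](mulKmx uB) hB -!mulmxA (mulmxA S) mulmxV // mul1mx.
  by rewrite mulVmx // mulmx1.
set B := C + one *m pi^T.
have cBR := @char_poly_rank1 R n C one pi^T hCone hpione.
pose rc := real_complex R.
have cB : char_poly (map_mx rc B) * 'X = char_poly (map_mx rc C) * ('X - 1).
  have eX : map_poly rc ('X - 1) = 'X - 1 by rewrite rmorphB /= map_polyX rmorph1.
  have := congr1 (map_poly rc) cBR.
  by rewrite !rmorphM /= eX map_polyX !map_char_poly.
set s := spectrum P.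
have hs : char_poly (map_mx rc P) = \prod_(z <- s) ('X - z%:P).
  rewrite /s /spectrum; case: closed_field_poly_normal => r /= Hr.
  by rewrite {1}Hr (monicP (char_poly_monic _)) scale1r.
have szs : size s = n.
  by have := size_char_poly (map_mx rc P); rewrite hs size_prod_XsubC => -[].
have cC : char_poly (map_mx rc C) = \prod_(z <- s) ('X - (1 - z)%:P).
  apply: poly_eq_eval => x _.
  rewrite horner_char_poly horner_prod.
  have -> : x%:M - map_mx rc C = (-1) *: ((1 - x)%:M - map_mx rc P).
    apply/matrixP => a b; rewrite /C !mxE.
    by case: (a == b); rewrite /= ?mulr1n ?mulr0n; ring.
  rewrite detZ -horner_char_poly hs horner_prod -szs prod_scale_seq.
  by apply: eq_bigr => z _; rewrite !hornerXsubC; ring.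
have one_s : (1 : R[i]) \in s.
  have := congr1 (horner^~ 0) cB; rewrite !hornerM hornerX mulr0 cC horner_prod.
  move=> /esym/eqP; rewrite mulf_eq0 !hornerE /= oppr_eq0 oner_eq0 orbF.
  rewrite prodf_seq_eq0 => /hasP [z zs]; rewrite hornerXsubC sub0r oppr_eq0 subr_eq0.
  by move/eqP => ->.
have cC' : char_poly (map_mx rc C) = 'X * \prod_(z <- rem 1 s) ('X - (1 - z)%:P).
  by rewrite cC (perm_big _ (perm_to_rem one_s)) big_cons subrr subr0.
have cB' : char_poly (map_mx rc B) =
    \prod_(z <- 1 :: map (fun z => 1 - z) (rem 1 s)) ('X - z%:P).
  have X0 : ('X : {poly R[i]}) != 0 by rewrite polyX_eq0.
  apply: (mulIf X0); rewrite cB cC' big_cons big_map.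
  by rewrite polyC1; ring.
have uBc : map_mx rc B \in unitmx by rewrite map_unitmx.
have := @trace_inv _ n _ _ n0 uBc cB'.
rewrite big_cons invr1 big_map -map_invmx hBinv trace_map_mx => htr.
by rewrite /kemeny -/s htr addrC addKr.
Qed.

Lemma connect_eq (T : finType) (e : rel T) (U : Type) (f : T -> U) :
  (forall x y, e x y -> f x = f y) -> forall x y, connect e x y -> f x = f y.
Proof.
move=> H x y /connectP [p]; elim: p x => [|a p IH] x /=; first by move=> _ ->.
by case/andP => exa pa ey; rewrite (H _ _ exa); exact: IH pa ey.
Qed.

Lemma qformE (R : comNzRingType) n (M : 'M[R]_n) (z : 'cV[R]_n) :
  (z^T *m M *m z) 0 0 = \sum_k \sum_l z k 0 * M k l * z l 0.
Proof.
rewrite mxE (exchange_big) /=; apply: eq_bigr => l _.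
rewrite mxE mulr_suml; apply: eq_bigr => k _.
by rewrite mxE.
Qed.

Lemma posdef_unit (R : rcfType) n (S : 'M[R]_n) : posdef S -> S \in unitmx.
Proof.
move=> pd; apply: contraT => nu.
have : \det S == 0 by rewrite unitmxE unitfE negbK in nu.
case/det0P => w w0 wS.
have := pd w^T; rewrite trmxK wS mul0mx mxE ltxx; apply.
by rewrite trmx_eq0.
Qed.

Lemma posdef_S (R : rcfType) n (A : 'M[R]_n) :
  (0 < n)%N -> A^T = A -> (forall k l, 0 <= A k l) ->
  (forall k, 0 < degv A k 0) -> connected A ->
  posdef (degmx A - A + (vol A)^-1 *: (degv A *m (degv A)^T)).
Proof.
move=> n0 hsym hnn hdeg hconn z z0.
set d := degv A.
have hvol : 0 < vol A.
  rewrite /vol (bigD1 (Ordinal n0)) //=.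
  by rewrite ltr_pwDl ?hdeg // sumr_ge0 // => k _; rewrite ltW.
have dE : forall k, d k 0 = \sum_l A k l.
  by move=> k; rewrite /d /degv mxE; apply: eq_bigr => l _; rewrite mxE mulr1.
have Asym : forall k l, A k l = A l k by move=> k l; rewrite -{1}hsym mxE.
have hdeg' : forall k, 0 < d k 0 := hdeg.
have volE : vol A = \sum_k d k 0 by [].
have DE : degmx A = diag_mx d^T by [].
clearbody d.
set u := z^T *m d.
set qD := \sum_k z k 0 * (d k 0 * z k 0).
set qA := \sum_k \sum_l z k 0 * A k l * z l 0.
have hform : (z^T *m (degmx A - A + (vol A)^-1 *: (d *m d^T)) *m z) 0 0
             = qD - qA + (vol A)^-1 * (u 0 0 * u 0 0).
  have addE : forall X Y : 'M[R]_1, (X + Y) 0 0 = X 0 0 + Y 0 0.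
    by move=> X Y; rewrite mxE.
  have oppE : forall X : 'M[R]_1, (- X) 0 0 = - X 0 0 by move=> X; rewrite mxE.
  rewrite !mulmxDr !mulmxDl mulmxN mulNmx !addE oppE qformE -/qA.
  congr (_ - _ + _).
  - apply: eq_bigr => k _; rewrite (bigD1 k) //= big1 ?addr0.
      by rewrite DE !mxE eqxx mulr1n mulrA [X in X * _]mulrC.
    by move=> l lk; rewrite DE !mxE eq_sym (negbTE lk) mulr0n mulr0 mul0r.
  - by rewrite qformE.
  rewrite -scalemxAr -scalemxAl mxE; congr (_ * _).
  have hu : u^T = d^T *m z by rewrite /u trmx_mul trmxK.
  rewrite -!mulmxA mulmxA -hu -/u.
  by rewrite mxE big_ord1 [u^T _ _]mxE.
set W := \sum_k \sum_l A k l * (z k 0 - z l 0) ^+ 2.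
have e1 : \sum_k \sum_l A k l * z k 0 ^+ 2 = qD.
  by apply: eq_bigr => k _; rewrite -mulr_suml -dE; ring.
have e2 : \sum_k \sum_l A k l * z l 0 ^+ 2 = qD.
  rewrite exchange_big /= -e1; apply: eq_bigr => l _; apply: eq_bigr => k _.
  by rewrite Asym.
have ex : forall k l, A k l * (z k 0 - z l 0) ^+ 2 =
   A k l * z k 0 ^+ 2 + A k l * z l 0 ^+ 2 - 2 * (z k 0 * A k l * z l 0).
  by move=> k l; ring.
have hW : W = 2 * (qD - qA).
  rewrite /W.
  under eq_bigr do under eq_bigr do rewrite ex.
  under eq_bigr do rewrite sumrB big_split /= -mulr_sumr.
  by rewrite sumrB big_split /= -mulr_sumr e1 e2 -/qA; ring.
have W0 : 0 <= W.
  by apply: sumr_ge0 => k _; apply: sumr_ge0 => l _; rewrite mulr_ge0 // ?sqr_ge0.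
set t := (vol A)^-1 * (u 0 0 * u 0 0).
have t0 : 0 <= t.
  by apply: mulr_ge0; [rewrite invr_ge0 ltW | rewrite -expr2 sqr_ge0].
have hq : qD - qA = W / 2.
  rewrite hW mulrC mulrA mulVf ?mul1r // pnatr_eq0 //.
rewrite hform hq lt_def addr_ge0 ?divr_ge0 // andbT.
apply/eqP => /eqP; rewrite paddr_eq0 ?divr_ge0 // => /andP [/eqP Wz /eqP tz].
have Wz' : W = 0 by move/eqP: Wz; rewrite mulf_eq0 invr_eq0 pnatr_eq0 orbF => /eqP.
have uz : u 0 0 = 0.
  move/eqP: tz; rewrite mulf_eq0 invr_eq0 gt_eqF //= mulf_eq0 orbb.
  by move/eqP.
have inner0 := psumr_eq0P (fun k _ => sumr_ge0 _ (fun l _ => mulr_ge0 (hnn k l) (sqr_ge0 (z k 0 - z l 0)))) Wz'.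
have hedge : forall k l, adjrel A k l -> z k 0 = z l 0.
  move=> k l; rewrite /adjrel => Akl.
  have := psumr_eq0P (fun l _ => mulr_ge0 (hnn k l) (sqr_ge0 (z k 0 - z l 0))) (inner0 k isT) (i:=l) isT.
  move/eqP; rewrite mulf_eq0 gt_eqF //= sqrf_eq0 subr_eq0.
  by move/eqP.
pose k0 := Ordinal n0.
have hall : forall k, z k 0 = z k0 0.
  by move=> k; apply: (@connect_eq _ _ _ (fun k => z k 0) hedge); apply: hconn.
have : u 0 0 = z k0 0 * vol A.
  rewrite /u mxE volE mulr_sumr; apply: eq_bigr => k _.
  by rewrite mxE hall.
rewrite uz => /esym /eqP; rewrite mulf_eq0 (gt_eqF hvol) orbF => /eqP zk0.
move/negP: z0; apply; apply/eqP/matrixP => k l.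
by rewrite ord1 hall zk0 mxE.
Qed.

Lemma sum_delta (R : comNzRingType) n (i : 'I_n) (f : 'I_n -> R) :
  \sum_k (k == i)%:R * f k = f i.
Proof.
rewrite (bigD1 i) //= eqxx mul1r big1 ?addr0 // => k /negbTE ->.
by rewrite mul0r.
Qed.

Theorem mainTheorem8 (R : rcfType) (n : nat) (A : 'M[R]_n) (i j : 'I_n) :
  A^T = A ->
  (forall k l, 0 <= A k l) ->
  (forall k, 0 < degv A k 0) ->
  connected A ->
  i != j ->
  0 < A i j ->
  ~ cut_edge A i j ->
  let d := degv A in
  let D := degmx A in
  let v := evec R i - evec R j in
  let Ahat := A + A i j *: (v *m v^T) in
  let c := kemeny (invmx D *m Ahat) - kemeny (invmx D *m A) in
  let S := D - A + (vol A)^-1 *: (d *m d^T) in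
  let x := invmx S *m v in
  let alpha := A i j * (x i 0 - x j 0) in
  let beta := A i j * (x^T *m D *m x) 0 0 in
  [/\ S^T = S, posdef S, alpha != 1 & c = real_complex R (beta / (1 - alpha))].
Proof.
move=> hsym hnn hdeg hconn hij haij hcut d D v Ahat c S x alpha beta.
have n0 : (0 < n)%N by apply: leq_ltn_trans (ltn_ord i).
set a := A i j.
have vE : forall k, v k 0 = (k == i)%:R - (k == j)%:R.
  by move=> k; rewrite /v /evec !mxE !andbT.
have vTy : forall y : 'cV[R]_n, v^T *m y = (y i 0 - y j 0)%:M.
  move=> y; apply/matrixP => p q; rewrite !ord1 !mxE /= mulr1n.
  under eq_bigr do rewrite mxE vE mulrBl.
  by rewrite sumrB !sum_delta.
have hdegv : degv Ahat = d.
  rewrite /degv /Ahat mulmxDl -scalemxAl -mulmxA vTy !mxE subrr.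
  have -> : (0 : R)%:M = 0 :> 'M[R]_1 by apply/matrixP => p q; rewrite !mxE mul0rn.
  by rewrite mulmx0 scaler0 addr0.
have hdegmx : degmx Ahat = D by rewrite /degmx hdegv.
have hvolE : vol Ahat = vol A by rewrite /vol hdegv.
have AhE : forall k l, Ahat k l = A k l + a * (v k 0 * v l 0).
  move=> k l; rewrite /Ahat mxE; congr (_ + _); rewrite mxE; congr (_ * _).
  by rewrite mxE big_ord1 [v^T _ _]mxE.
have Asym : forall k l, A k l = A l k by move=> k l; rewrite -{1}hsym mxE.
have hij' : (i == j) = false by apply: negbTE.
have hji : (j == i) = false by rewrite eq_sym.
have hdel : forall k l, del_edge A i j k l <= Ahat k l.
  move=> k l; rewrite AhE !vE mxE.
  case: ifP => [/orP [/andP [/eqP -> /eqP ->] | /andP [/eqP -> /eqP ->]] | h].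
  - rewrite !eqxx hij' hji /= ?mulr1n ?mulr0n /a.
    by rewrite subr0 sub0r mul1r mulrN1 subrr.
  - rewrite !eqxx hij' hji /= ?mulr1n ?mulr0n /a Asym.
    by rewrite subr0 sub0r mulr1 mulrN1 subrr.
  rewrite lerDl; apply: mulr_ge0; first exact: ltW.
  move: h; case: (k == i); case: (k == j); case: (l == i); case: (l == j) => //= _;
  rewrite ?mulr1n ?mulr0n ?subrr ?mul0r ?mulr0 ?subr0 ?sub0r ?mulr1 ?mul1r ?mulrN1 ?mulN1r ?opprK //.
have hAhnn : forall k l, 0 <= Ahat k l.
  move=> k l; apply: le_trans (hdel k l); rewrite mxE; case: ifP => // _.
have hAhsym : Ahat^T = Ahat.
  by rewrite /Ahat linearD linearZ /= trmx_mul trmxK hsym.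
have hdelconn : connected (del_edge A i j).
  move=> k l; apply/negPn/negP => nc; apply: hcut => hc; by move: nc; rewrite hc.
have hAhconn : connected Ahat.
  move=> k l; apply: (connect_sub _ (hdelconn k l)) => p q; rewrite /adjrel => hpq.
  by apply: connect1; rewrite /adjrel; exact: lt_le_trans hpq (hdel p q).
have hAhdeg : forall k, 0 < degv Ahat k 0 by move=> k; rewrite hdegv.
set Sh := D - Ahat + (vol A)^-1 *: (d *m d^T).
have pdS : posdef S := posdef_S _ _ _ n0 hsym hnn hdeg hconn.
have pdSh : posdef Sh.
  by have := posdef_S _ _ _ n0 hAhsym hAhnn hAhdeg hAhconn; rewrite hdegmx hvolE hdegv.
have uS := posdef_unit _ _ _ pdS.
have uSh := posdef_unit _ _ _ pdSh.
have hSh : Sh = S - a *: (v *m v^T).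
  by rewrite /Sh /S /Ahat opprD !addrA (addrAC (D - A)).
have hSsym : S^T = S.
  rewrite /S linearD linearB /= linearZ /= trmx_mul trmxK hsym.
  by rewrite /D /degmx tr_diag_mx.
have hSx : S *m x = v by rewrite /x mulKVmx.
have vTSinv : v^T *m invmx S = x^T by rewrite /x trmx_mul trmx_inv hSsym.
have hShx : Sh *m x = (1 - alpha) *: v.
  rewrite hSh mulmxBl hSx -scalemxAl -mulmxA vTy mul_mx_scalar scalerA.
  by rewrite scalerBl scale1r.
have v0 : v != 0.
  apply/negP => /eqP /matrixP /(_ i 0); rewrite vE eqxx hij' !mxE /= subr0.
  by move/eqP; rewrite oner_eq0.
have x0 : x != 0.
  by apply: contraNneq v0 => hx; rewrite -hSx hx mulmx0.
have alpha1 : alpha != 1.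
  apply/eqP => h1; have := pdSh x x0.
  by rewrite -mulmxA hShx h1 subrr scale0r mulmx0 mxE ltxx.
have hinv : invmx Sh = invmx S + (a / (1 - alpha)) *: (x *m x^T).
  have h : Sh *m (invmx S + (a / (1 - alpha)) *: (x *m x^T)) = 1%:M.
    rewrite mulmxDr -scalemxAr mulmxA hShx hSh mulmxBl mulmxV //.
    rewrite -scalemxAl -mulmxA vTSinv -scalemxAl scalerA.
    by rewrite divfK ?subr_eq0 1?eq_sym // subrK.
  by rewrite -[RHS](mulKmx uSh) h mulmx1.
have uSh' : (degmx Ahat - Ahat + (vol Ahat)^-1 *: (degv Ahat *m (degv Ahat)^T)) \in unitmx.
  by rewrite hdegmx hvolE hdegv.
have kA := kemeny_trace _ _ _ n0 hdeg uS.
have kAh := kemeny_trace _ _ _ n0 hAhdeg uSh'.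
rewrite hdegmx hvolE hdegv -/Sh in kAh.
split => //.
rewrite /c kAh kA hinv mulmxDl mxtraceD rmorphD /=.
have -> : \tr ((a / (1 - alpha)) *: (x *m x^T) *m D) = beta / (1 - alpha).
  rewrite -scalemxAl mxtraceZ -mulmxA mxtrace_mulC trace_mx11 /beta.
  by rewrite mulrAC -/a.
set T := real_complex R (\tr (invmx S *m D)).
by rewrite opprB addrA subrK addrAC subrr add0r.
Qed.
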